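(* Let $\mathcal C$ be a locally additive 2-category which is idempotent-complete (in the 2-categorical sense) and let $x\in\mathcal C$ be an object. If the ring of 2-endomorphisms of $\mathrm{id}_x$ admits a finite decomposition $\mathrm{End}(\mathrm{id}_x)=\bigoplus_{i\in I}A_i$ (as a direct sum of rings), then $x$ admits a direct sum decomposition $x\simeq\boxplus_{i\in I}x_i$ with $\mathrm{End}(\mathrm{id}_{x_i})\cong A_i$.
   Context: A 2-category (bicategory) is locally additive if its Hom-categories are additive. It is idempotent-complete if its Hom-categories are idempotent complete and every 2-categorical idempotent splits, where a 2-categorical idempotent is $(c,e,\mu,\delta)$ with $e\colon c\to c$, $\mu\colon e\circ e\Rightarrow e$ non-unital associative, $\delta\colon e\Rightarrow e\circ e$ coassociative and an $e$-bimodule map with $\mu\delta=\mathrm{id}_e$, and a splitting is an object $d$ with $f\colon c\to d$, $g\colon d\to c$, $\phi\colon f\circ g\Rightarrow\mathrm{id}_d$, $\gamma\colon\mathrm{id}_d\Rightarrow f\circ g$, $\phi\gamma=\mathrm{id}$, and $g\circ f\cong e$ compatibly with $\mu,\delta$. A direct sum of finitely many objects $x_i$ is an object $\boxplus_ix_i$ with 1-morphisms $\iota_j\colon x_j\to\boxplus_ix_i$, $\rho_j\colon\boxplus_ix_i\to x_j$ such that $\rho_j\circ\iota_j\cong\mathrm{id}_{x_j}$, $\rho_j\circ\iota_k\cong0$ for $j\ne k$, and $\mathrm{id}_{\boxplus_ix_i}\cong\bigoplus_i\iota_i\circ\rho_i$. *)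

(* Defs.v *)
From HB Require Import structures.
From mathcomp Require Import all_boot all_order all_algebra.
Set Implicit Arguments. Unset Strict Implicit. Unset Printing Implicit Defensive.
Import GRing.Theory.
Local Open Scope ring_scope.

Record bicat := Bicat {
  ob : Type;
  hom : ob -> ob -> Type;
  cell : forall x y : ob, hom x y -> hom x y -> zmodType;
  id1 : forall x, hom x x;
  comp1 : forall x y z, hom y z -> hom x y -> hom x z;
  id2 : forall x y (f : hom x y), cell f f;
  vcomp : forall x y (f g h : hom x y), cell g h -> cell f g -> cell f h;
  hcomp : forall x y z (f f' : hom y z) (g g' : hom x y),
      cell f f' -> cell g g' -> cell (comp1 f g) (comp1 f' g');
  assoc : forall w x y z (h : hom y z) (g : hom x y) (f : hom w x),
      cell (comp1 (comp1 h g) f) (comp1 h (comp1 g f));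
  assoc_inv : forall w x y z (h : hom y z) (g : hom x y) (f : hom w x),
      cell (comp1 h (comp1 g f)) (comp1 (comp1 h g) f);
  lunit : forall x y (f : hom x y), cell (comp1 (id1 y) f) f;
  lunit_inv : forall x y (f : hom x y), cell f (comp1 (id1 y) f);
  runit : forall x y (f : hom x y), cell (comp1 f (id1 x)) f;
  runit_inv : forall x y (f : hom x y), cell f (comp1 f (id1 x))
}.

Arguments hom {_} x y.
Arguments cell {_ x y} f g.
Arguments id1 {_} x.
Arguments comp1 {_ x y z} g f.
Arguments id2 {_ x y} f.
Arguments vcomp {_ x y f g h} b a.
Arguments hcomp {_ x y z f f' g g'} b a.
Arguments assoc {_ w x y z} h g f.
Arguments assoc_inv {_ w x y z} h g f.
Arguments lunit {_ x y} f.
Arguments lunit_inv {_ x y} f.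
Arguments runit {_ x y} f.
Arguments runit_inv {_ x y} f.

Section Defs.
Variable C : bicat.

Definition bicat_axioms : Prop :=
  [/\ (forall (x y : ob C) (f g h k : hom x y) (c : cell h k) (b : cell g h) (a : cell f g),
         vcomp c (vcomp b a) = vcomp (vcomp c b) a),
      (forall (x y : ob C) (f g : hom x y) (a : cell f g), vcomp (id2 g) a = a /\ vcomp a (id2 f) = a),
      (forall (x y z : ob C) (f : hom y z) (g : hom x y), hcomp (id2 f) (id2 g) = id2 (comp1 f g)),
      (forall (x y z : ob C) (f f' f'' : hom y z) (g g' g'' : hom x y)
              (b : cell f f') (b' : cell f' f'') (a : cell g g') (a' : cell g' g''),
         hcomp (vcomp b' b) (vcomp a' a) = vcomp (hcomp b' a') (hcomp b a)) &
   [/\ (forall (w x y z : ob C) (h h' : hom y z) (g g' : hom x y) (f f' : hom w x)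
              (c : cell h h') (b : cell g g') (a : cell f f'),
         vcomp (assoc h' g' f') (hcomp (hcomp c b) a)
         = vcomp (hcomp c (hcomp b a)) (assoc h g f)),
      (forall (w x y z : ob C) (h : hom y z) (g : hom x y) (f : hom w x),
         vcomp (assoc_inv h g f) (assoc h g f) = id2 _ /\
         vcomp (assoc h g f) (assoc_inv h g f) = id2 _),
      (forall (x y : ob C) (f f' : hom x y) (a : cell f f'),
         vcomp (lunit f') (hcomp (id2 (id1 y)) a) = vcomp a (lunit f) /\
         vcomp (runit f') (hcomp a (id2 (id1 x))) = vcomp a (runit f)),
      (forall (x y : ob C) (f : hom x y),
         [/\ vcomp (lunit_inv f) (lunit f) = id2 _, vcomp (lunit f) (lunit_inv f) = id2 _,
             vcomp (runit_inv f) (runit f) = id2 _ & vcomp (runit f) (runit_inv f) = id2 _]) &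
      ((forall (v w x y z : ob C) (k : hom y z) (h : hom x y) (g : hom w x) (f : hom v w),
         vcomp (assoc k h (comp1 g f)) (assoc (comp1 k h) g f)
         = vcomp (hcomp (id2 k) (assoc h g f))
                 (vcomp (assoc k (comp1 h g) f) (hcomp (assoc k h g) (id2 f)))) /\
      (forall (x y z : ob C) (f : hom x y) (g : hom y z),
         vcomp (hcomp (id2 g) (lunit f)) (assoc g (id1 y) f)
         = hcomp (runit g) (id2 f)))]].

Definition is_zero1 (x y : ob C) (z : hom x y) : Prop := id2 z = 0.

Definition iso2 (x y : ob C) (f g : hom x y) : Prop :=
  exists (a : cell f g) (b : cell g f), vcomp b a = id2 f /\ vcomp a b = id2 g.

Definition locally_additive : Prop :=
  [/\ (forall (x y : ob C) (f g h : hom x y) (b : cell g h) (a1 a2 : cell f g),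
         vcomp b (a1 + a2) = vcomp b a1 + vcomp b a2),
      (forall (x y : ob C) (f g h : hom x y) (b1 b2 : cell g h) (a : cell f g),
         vcomp (b1 + b2) a = vcomp b1 a + vcomp b2 a),
      (forall (x y z : ob C) (f f' : hom y z) (g g' : hom x y) (b : cell f f') (a1 a2 : cell g g'),
         hcomp b (a1 + a2) = hcomp b a1 + hcomp b a2),
      (forall (x y z : ob C) (f f' : hom y z) (g g' : hom x y) (b1 b2 : cell f f') (a : cell g g'),
         hcomp (b1 + b2) a = hcomp b1 a + hcomp b2 a) &
      ((forall (x y : ob C), exists z : hom x y, is_zero1 z) /\
      (forall (x y : ob C) (f g : hom x y), exists (s : hom x y) (i1 : cell f s) (i2 : cell g s)
            (p1 : cell s f) (p2 : cell s g),
         [/\ vcomp p1 i1 = id2 f, vcomp p2 i2 = id2 g, vcomp p1 i2 = 0, vcomp p2 i1 = 0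
           & vcomp i1 p1 + vcomp i2 p2 = id2 s]))].

Definition idem2 (c : ob C) (e : hom c c) (mu : cell (comp1 e e) e) (de : cell e (comp1 e e)) : Prop :=
  [/\ vcomp mu (hcomp mu (id2 e)) = vcomp mu (vcomp (hcomp (id2 e) mu) (assoc e e e)),
      vcomp (assoc e e e) (vcomp (hcomp de (id2 e)) de) = vcomp (hcomp (id2 e) de) de,
      vcomp de mu = vcomp (hcomp mu (id2 e)) (vcomp (assoc_inv e e e) (hcomp (id2 e) de)),
      vcomp de mu = vcomp (hcomp (id2 e) mu) (vcomp (assoc e e e) (hcomp de (id2 e))) &
      vcomp mu de = id2 e].

Definition splits (c : ob C) (e : hom c c) (mu : cell (comp1 e e) e) (de : cell e (comp1 e e)) : Prop :=
  exists (d : ob C) (f : hom c d) (g : hom d c)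
         (phi : cell (comp1 f g) (id1 d)) (ga : cell (id1 d) (comp1 f g))
         (th : cell (comp1 g f) e) (thi : cell e (comp1 g f)),
    let mu' : cell (comp1 (comp1 g f) (comp1 g f)) (comp1 g f) :=
      vcomp (hcomp (id2 g) (lunit f))
       (vcomp (hcomp (id2 g) (hcomp phi (id2 f)))
        (vcomp (hcomp (id2 g) (assoc_inv f g f)) (assoc g f (comp1 g f)))) in
    let de' : cell (comp1 g f) (comp1 (comp1 g f) (comp1 g f)) :=
      vcomp (assoc_inv g f (comp1 g f))
       (vcomp (hcomp (id2 g) (assoc f g f))
        (vcomp (hcomp (id2 g) (hcomp ga (id2 f))) (hcomp (id2 g) (lunit_inv f)))) in
    [/\ vcomp phi ga = id2 (id1 d),
        vcomp thi th = id2 _, vcomp th thi = id2 e,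
        vcomp th mu' = vcomp mu (hcomp th th) &
        vcomp de th = vcomp (hcomp th th) de'].

Definition idem_complete : Prop :=
  (forall (x y : ob C) (f : hom x y) (p : cell f f), vcomp p p = p ->
     exists (g : hom x y) (r : cell f g) (s : cell g f),
       vcomp r s = id2 g /\ vcomp s r = p) /\
  (forall (c : ob C) (e : hom c c) (mu : cell (comp1 e e) e) (de : cell e (comp1 e e)),
     idem2 mu de -> splits mu de).

Definition is_biproduct (I : finType) (x y : ob C) (F : I -> hom x y) (s : hom x y) : Prop :=
  exists (inj : forall i, cell (F i) s) (pr : forall i, cell s (F i)),
    [/\ forall i, vcomp (pr i) (inj i) = id2 (F i),
        forall i j, i != j -> vcomp (pr i) (inj j) = 0 &
        \sum_(i : I) vcomp (inj i) (pr i) = id2 s].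

Definition is_direct_sum (I : finType) (xs : I -> ob C) (X : ob C) : Prop :=
  exists (io : forall i, hom (xs i) X) (rh : forall i, hom X (xs i)),
    [/\ forall j, iso2 (comp1 (rh j) (io j)) (id1 (xs j)),
        forall j k, j != k -> exists z, is_zero1 z /\ iso2 (comp1 (rh j) (io k)) z &
        exists s, is_biproduct (fun i => comp1 (io i) (rh i)) s /\ iso2 (id1 X) s].

Definition equiv_ob (x y : ob C) : Prop :=
  exists (u : hom x y) (v : hom y x), iso2 (comp1 v u) (id1 x) /\ iso2 (comp1 u v) (id1 y).

(* The ring End(id_x) (multiplication = vertical composition). *)
Definition End2 (x : ob C) : zmodType := cell (id1 x) (id1 x).

(* End(id_x) = \bigoplus_i A_i as a direct sum of rings (A_i two-sided ideals,
   internal direct sum decomposition). *)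
Definition ring_decomp (x : ob C) (I : finType) (A : I -> End2 x -> Prop) : Prop :=
  [/\ forall i, A i 0,
      forall i a b, A i a -> A i b -> A i (a - b),
      forall i r a, A i a -> A i (vcomp r a) /\ A i (vcomp a r),
      forall r : End2 x, exists a : I -> End2 x, (forall i, A i (a i)) /\ r = \sum_(i : I) a i &
      forall a b : I -> End2 x, (forall i, A i (a i)) -> (forall i, A i (b i)) ->
        \sum_(i : I) a i = \sum_(i : I) b i -> forall i, a i = b i].

Definition ring_iso_onto (y x : ob C) (phi : End2 y -> End2 x) (A : End2 x -> Prop) : Prop :=
  [/\ forall a b, phi (a + b) = phi a + phi b,
      forall a b, phi (vcomp a b) = vcomp (phi a) (phi b),
      injective phi,
      forall a, A (phi a) &
      forall b, A b -> exists a, phi a = b].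

End Defs.

(* Main.v *)
Require Import Defs.
From mathcomp Require Import all_boot all_order all_algebra.
Set Implicit Arguments. Unset Strict Implicit. Unset Printing Implicit Defensive.
Local Notation hom := Defs.hom.
Import GRing.Theory.
From Stdlib Require Import ClassicalEpsilon.
Local Open Scope ring_scope.

Notation "b • a" := (vcomp b a) (at level 40, left associativity).
Notation "b ⊗ a" := (hcomp b a) (at level 38, left associativity).
Notation "1_ f" := (id2 f) (at level 2).

Section Basic.
Variable C : bicat.
Hypothesis HC : bicat_axioms C.

Lemma vA (x y : ob C) (f g h k : hom x y) (c : cell h k) (b : cell g h) (a : cell f g) :
  c • (b • a) = c • b • a.
Proof. by case: HC => [H _ _ _ _]; apply: H. Qed.
Lemma v1l (x y : ob C) (f g : hom x y) (a : cell f g) : 1_g • a = a.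
Proof. by case: HC => [_ H _ _ _]; case: (H _ _ _ _ a). Qed.
Lemma v1r (x y : ob C) (f g : hom x y) (a : cell f g) : a • 1_f = a.
Proof. by case: HC => [_ H _ _ _]; case: (H _ _ _ _ a). Qed.
Lemma h11 (x y z : ob C) (f : hom y z) (g : hom x y) : 1_f ⊗ 1_g = 1_(comp1 f g).
Proof. by case: HC => [_ _ H _ _]; apply: H. Qed.
Lemma hv (x y z : ob C) (f f' f'' : hom y z) (g g' g'' : hom x y)
   (b : cell f f') (b' : cell f' f'') (a : cell g g') (a' : cell g' g'') :
  (b' • b) ⊗ (a' • a) = (b' ⊗ a') • (b ⊗ a).
Proof. by case: HC => [_ _ _ H _]; apply: H. Qed.
Lemma aN (w x y z : ob C) (h h' : hom y z) (g g' : hom x y) (f f' : hom w x)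
   (c : cell h h') (b : cell g g') (a : cell f f') :
  assoc h' g' f' • (c ⊗ b ⊗ a) = (c ⊗ (b ⊗ a)) • assoc h g f.
Proof. by case: HC => [_ _ _ _ [H _ _ _ _]]; apply: H. Qed.
Lemma aiK (w x y z : ob C) (h : hom y z) (g : hom x y) (f : hom w x) :
  assoc_inv h g f • assoc h g f = 1_ _.
Proof. by case: HC => [_ _ _ _ [_ H _ _ _]]; case: (H _ _ _ _ h g f). Qed.
Lemma aKi (w x y z : ob C) (h : hom y z) (g : hom x y) (f : hom w x) :
  assoc h g f • assoc_inv h g f = 1_ _.
Proof. by case: HC => [_ _ _ _ [_ H _ _ _]]; case: (H _ _ _ _ h g f). Qed.
Lemma lN (x y : ob C) (f f' : hom x y) (a : cell f f') :
  lunit f' • (1_(id1 y) ⊗ a) = a • lunit f.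
Proof. by case: HC => [_ _ _ _ [_ _ H _ _]]; case: (H _ _ _ _ a). Qed.
Lemma rN (x y : ob C) (f f' : hom x y) (a : cell f f') :
  runit f' • (a ⊗ 1_(id1 x)) = a • runit f.
Proof. by case: HC => [_ _ _ _ [_ _ H _ _]]; case: (H _ _ _ _ a). Qed.
Lemma liK (x y : ob C) (f : hom x y) : lunit_inv f • lunit f = 1_ _.
Proof. by case: HC => [_ _ _ _ [_ _ _ H _]]; case: (H _ _ f). Qed.
Lemma lKi (x y : ob C) (f : hom x y) : lunit f • lunit_inv f = 1_ _.
Proof. by case: HC => [_ _ _ _ [_ _ _ H _]]; case: (H _ _ f). Qed.
Lemma riK (x y : ob C) (f : hom x y) : runit_inv f • runit f = 1_ _.
Proof. by case: HC => [_ _ _ _ [_ _ _ H _]]; case: (H _ _ f). Qed.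
Lemma rKi (x y : ob C) (f : hom x y) : runit f • runit_inv f = 1_ _.
Proof. by case: HC => [_ _ _ _ [_ _ _ H _]]; case: (H _ _ f). Qed.
Lemma pent (v w x y z : ob C) (k : hom y z) (h : hom x y) (g : hom w x) (f : hom v w) :
  assoc k h (comp1 g f) • assoc (comp1 k h) g f
  = (1_k ⊗ assoc h g f) • (assoc k (comp1 h g) f • (assoc k h g ⊗ 1_f)).
Proof. by case: HC => [_ _ _ _ [_ _ _ _ [H _]]]; apply: H. Qed.
Lemma tri (x y z : ob C) (f : hom x y) (g : hom y z) :
  (1_g ⊗ lunit f) • assoc g (id1 y) f = runit g ⊗ 1_f.
Proof. by case: HC => [_ _ _ _ [_ _ _ _ [_ H]]]; apply: H. Qed.

Hypothesis Hadd : locally_additive C.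
Lemma vDr (x y : ob C) (f g h : hom x y) (b : cell g h) (a1 a2 : cell f g) :
  b • (a1 + a2) = b • a1 + b • a2.
Proof. by case: Hadd => H _ _ _ _; apply: H. Qed.
Lemma vDl (x y : ob C) (f g h : hom x y) (b1 b2 : cell g h) (a : cell f g) :
  (b1 + b2) • a = b1 • a + b2 • a.
Proof. by case: Hadd => _ H _ _ _; apply: H. Qed.
Lemma hDr (x y z : ob C) (f f' : hom y z) (g g' : hom x y) (b : cell f f') (a1 a2 : cell g g') :
  b ⊗ (a1 + a2) = b ⊗ a1 + b ⊗ a2.
Proof. by case: Hadd => _ _ H _ _; apply: H. Qed.
Lemma hDl (x y z : ob C) (f f' : hom y z) (g g' : hom x y) (b1 b2 : cell f f') (a : cell g g') :
  (b1 + b2) ⊗ a = b1 ⊗ a + b2 ⊗ a.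
Proof. by case: Hadd => _ _ _ H _; apply: H. Qed.
Lemma v0r (x y : ob C) (f g h : hom x y) (b : cell g h) : b • (0 : cell f g) = 0.
Proof. by apply: (addrI (b • 0)); rewrite -vDr !addr0. Qed.
Lemma v0l (x y : ob C) (f g h : hom x y) (a : cell f g) : (0 : cell g h) • a = 0.
Proof. by apply: (addrI (0 • a)); rewrite -vDl !addr0. Qed.
Lemma h0r (x y z : ob C) (f f' : hom y z) (g g' : hom x y) (b : cell f f') :
  b ⊗ (0 : cell g g') = 0.
Proof. by apply: (addrI (b ⊗ 0)); rewrite -hDr !addr0. Qed.
Lemma h0l (x y z : ob C) (f f' : hom y z) (g g' : hom x y) (a : cell g g') :
  (0 : cell f f') ⊗ a = 0.
Proof. by apply: (addrI (0 ⊗ a)); rewrite -hDl !addr0. Qed.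

Lemma vA' (x y : ob C) (f g h k : hom x y) (c : cell h k) (b : cell g h) (a : cell f g) :
  c • b • a = c • (b • a).
Proof. by rewrite vA. Qed.

Lemma hv1l (x y z : ob C) (f : hom y z) (g g' g'' : hom x y) (a : cell g g') (a' : cell g' g'') :
  (1_f ⊗ a') • (1_f ⊗ a) = 1_f ⊗ (a' • a).
Proof. by rewrite -hv v1l. Qed.
Lemma hv1r (x y z : ob C) (f f' f'' : hom y z) (g : hom x y) (b : cell f f') (b' : cell f' f'') :
  (b' ⊗ 1_g) • (b ⊗ 1_g) = (b' • b) ⊗ 1_g.
Proof. by rewrite -hv v1l. Qed.
Lemma hsl (x y z : ob C) (f f' : hom y z) (g g' : hom x y) (b : cell f f') (a : cell g g') :
  b ⊗ a = (b ⊗ 1_g') • (1_f ⊗ a).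
Proof. by rewrite -hv v1l v1r. Qed.
Lemma hsr (x y z : ob C) (f f' : hom y z) (g g' : hom x y) (b : cell f f') (a : cell g g') :
  b ⊗ a = (1_f' ⊗ a) • (b ⊗ 1_g).
Proof. by rewrite -hv v1l v1r. Qed.

Lemma hv1lA (x y z : ob C) (f : hom y z) (g g' g'' : hom x y) (h : hom x z)
  (a : cell g g') (a' : cell g' g'') (X : cell h (comp1 f g)) :
  (1_f ⊗ a') • ((1_f ⊗ a) • X) = (1_f ⊗ (a' • a)) • X.
Proof. by rewrite vA hv1l. Qed.
Lemma hv1rA (x y z : ob C) (f f' f'' : hom y z) (g : hom x y) (h : hom x z)
  (b : cell f f') (b' : cell f' f'') (X : cell h (comp1 f g)) :
  (b' ⊗ 1_g) • ((b ⊗ 1_g) • X) = ((b' • b) ⊗ 1_g) • X.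
Proof. by rewrite vA hv1r. Qed.
Lemma conj_inj (x y : ob C) (A B : hom x y) (i : cell A B) (j : cell B A) (X Y : cell A A) :
  j • i = 1_A -> i • X • j = i • Y • j -> X = Y.
Proof.
move=> ji H.
have E Z : Z = j • (i • Z • j) • i by rewrite !vA ji v1l vA' ji v1r.
by rewrite (E X) H -E.
Qed.

Lemma aiN (w x y z : ob C) (h h' : hom y z) (g g' : hom x y) (f f' : hom w x)
   (c : cell h h') (b : cell g g') (a : cell f f') :
  assoc_inv h' g' f' • (c ⊗ (b ⊗ a)) = (c ⊗ b ⊗ a) • assoc_inv h g f.
Proof.
rewrite -[LHS]v1r -(aKi h g f) vA [_ • _ • assoc h g f]vA' -aN.
by rewrite vA aiK v1l.
Qed.
Lemma liN (x y : ob C) (f f' : hom x y) (a : cell f f') :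
  lunit_inv f' • a = (1_(id1 y) ⊗ a) • lunit_inv f.
Proof.
rewrite -[LHS]v1r -(lKi f) vA [_ • _ • lunit f]vA' -lN.
by rewrite vA liK v1l.
Qed.
Lemma riN (x y : ob C) (f f' : hom x y) (a : cell f f') :
  runit_inv f' • a = (a ⊗ 1_(id1 x)) • runit_inv f.
Proof.
rewrite -[LHS]v1r -(rKi f) vA [_ • _ • runit f]vA' -rN.
by rewrite vA riK v1l.
Qed.

Lemma lfaith (x y : ob C) (f g : hom x y) (u v : cell f g) :
  1_(id1 y) ⊗ u = 1_(id1 y) ⊗ v -> u = v.
Proof.
move=> H.
have E w : w = lunit g • (1_(id1 y) ⊗ w) • lunit_inv f.
  by rewrite lN vA' lKi v1r.
by rewrite (E u) H -E.
Qed.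
Lemma rfaith (x y : ob C) (f g : hom x y) (u v : cell f g) :
  u ⊗ 1_(id1 x) = v ⊗ 1_(id1 x) -> u = v.
Proof.
move=> H.
have E w : w = runit g • (w ⊗ 1_(id1 x)) • runit_inv f.
  by rewrite rN vA' rKi v1r.
by rewrite (E u) H -E.
Qed.

(* Kelly's lemma *)
Lemma K1 (x y z : ob C) (g : hom y z) (f : hom x y) :
  lunit (comp1 g f) • assoc (id1 z) g f = lunit g ⊗ 1_f.
Proof.
apply: lfaith.
set P := assoc (id1 z) (comp1 (id1 z) g) f • (assoc (id1 z) (id1 z) g ⊗ 1_f).
set Q := (assoc_inv (id1 z) (id1 z) g ⊗ 1_f) • assoc_inv (id1 z) (comp1 (id1 z) g) f.
have PQ : P • Q = 1_ _.
  by rewrite /P /Q !vA' (vA (_ ⊗ 1_f)) hv1r aKi h11 v1l aKi.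
suff H : (1_(id1 z) ⊗ (lunit (comp1 g f) • assoc (id1 z) g f)) • P
       = (1_(id1 z) ⊗ (lunit g ⊗ 1_f)) • P.
  by rewrite -[LHS]v1r -PQ vA H -vA PQ v1r.
rewrite -hv1l vA' -pent vA tri -{1}(h11 g f) -aN.
rewrite -{1}(tri g (id1 z)) -{1}(v1l (1_f)) hv vA aN /P !vA.
done.
Qed.

Lemma lK1 (x y : ob C) (f : hom x y) : 1_(id1 y) ⊗ lunit f = lunit (comp1 (id1 y) f).
Proof.
have H := lN (lunit f).
rewrite -[LHS]v1l -(liK f) vA' H vA liK v1l //.
Qed.
Lemma rK1 (x y : ob C) (f : hom x y) : runit f ⊗ 1_(id1 x) = runit (comp1 f (id1 x)).
Proof.
have H := rN (runit f).
rewrite -[LHS]v1l -(riK f) vA' H vA riK v1l //.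
Qed.

Lemma K2 (y : ob C) : lunit (id1 y) = runit (id1 y).
Proof.
apply: rfaith.
by rewrite -K1 -lK1 tri.
Qed.

Lemma K1i (x y z : ob C) (g : hom y z) (f : hom x y) :
  assoc_inv (id1 z) g f • lunit_inv (comp1 g f) = lunit_inv g ⊗ 1_f.
Proof.
rewrite -[LHS]v1l -h11 -(liK g) -hv1r -K1 !vA' (vA (assoc _ _ _)) aKi v1l.
by rewrite lKi v1r.
Qed.

Lemma K2i (y : ob C) : lunit_inv (id1 y) = runit_inv (id1 y).
Proof.
by rewrite -[LHS]v1l -(riK (id1 y)) -K2 vA' lKi v1r.
Qed.

Definition Lw (x y : ob C) (h : hom x y) (c : cell (id1 y) (id1 y)) : cell h h :=
  lunit h • (c ⊗ 1_h) • lunit_inv h.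

Lemma LwE (x y : ob C) (h : hom x y) (c : cell (id1 y) (id1 y)) :
  lunit h • (c ⊗ 1_h) = Lw h c • lunit h.
Proof. by rewrite /Lw vA' liK v1r. Qed.

Lemma LwN (x y : ob C) (h k : hom x y) (t : cell h k) (c : cell (id1 y) (id1 y)) :
  t • Lw h c = Lw k c • t.
Proof.
rewrite /Lw !vA' liN (vA (c ⊗ 1_k)) -hv v1l v1r (hsr c t) !vA lN.
by [].
Qed.

Lemma Lw1 (y : ob C) (c : cell (id1 y) (id1 y)) : Lw (id1 y) c = c.
Proof. by rewrite /Lw K2 K2i rN vA' rKi v1r. Qed.

Lemma LwC (x y z : ob C) (g : hom y z) (f : hom x y) (c : cell (id1 z) (id1 z)) :
  Lw g c ⊗ 1_f = Lw (comp1 g f) c.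
Proof.
rewrite /Lw -!hv1r -K1 -K1i !vA' (vA (assoc _ _ _)) aN !vA' (vA (assoc _ _ _)) aKi h11 v1l.
by [].
Qed.

Lemma LwM (x y : ob C) (h : hom x y) (c c' : cell (id1 y) (id1 y)) :
  Lw h (c • c') = Lw h c • Lw h c'.
Proof.
by rewrite /Lw !vA' (vA (lunit_inv h)) liK v1l (vA (c ⊗ 1_h)) hv1r.
Qed.

Lemma EH (y : ob C) (a b : cell (id1 y) (id1 y)) :
  lunit (id1 y) • (a ⊗ b) = a • b • lunit (id1 y).
Proof.
by rewrite hsl vA LwE Lw1 vA' lN vA.
Qed.

Lemma lrN (y : ob C) (f : hom y y) (a : cell f (id1 y)) :
  lunit (id1 y) • (a ⊗ 1_(id1 y)) = a • runit f.
Proof. by rewrite K2 rN. Qed.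

Section Retr.
Variables (x d : ob C) (f : hom x d) (g : hom d x).
Variables (phi : cell (comp1 f g) (id1 d)) (ga : cell (id1 d) (comp1 f g)).
Hypothesis Hpg : phi • ga = 1_ _.

Lemma lform (z : ob C) (k k' : hom z d) (u : cell k k') :
  lunit k' • (phi ⊗ 1_k') • assoc_inv f g k' • (1_f ⊗ (1_g ⊗ u)) • assoc f g k
   • (ga ⊗ 1_k) • lunit_inv k = u.
Proof.
rewrite !vA' (vA (assoc_inv _ _ _)) aiN !vA' (vA (assoc_inv _ _ _)) aiK v1l h11.
rewrite (vA (phi ⊗ _)) -hsl (hsr phi u) !vA lN !vA' (vA (phi ⊗ _)) hv1r Hpg h11 v1l.
by rewrite lKi v1r.
Qed.

Lemma lcancel (z : ob C) (k k' : hom z d) (u v : cell k k') :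
  1_g ⊗ u = 1_g ⊗ v -> u = v.
Proof. by move=> H; rewrite -(lform u) -(lform v) H. Qed.

Lemma rform (z : ob C) (h h' : hom d z) (u : cell h h') :
  runit h' • (1_h' ⊗ phi) • assoc h' f g • ((u ⊗ 1_f) ⊗ 1_g) • assoc_inv h f g
   • (1_h ⊗ ga) • runit_inv h = u.
Proof.
rewrite !vA' (vA (assoc _ _ _)) aN !vA' (vA (assoc _ _ _)) aKi v1l h11.
rewrite (vA (_ ⊗ phi)) -hsr (hsl u phi) !vA rN !vA' (vA (_ ⊗ phi)) hv1l Hpg h11 v1l.
by rewrite rKi v1r.
Qed.

Lemma rcancel (z : ob C) (h h' : hom d z) (u v : cell h h') :
  u ⊗ 1_f = v ⊗ 1_f -> u = v.
Proof. by move=> H; rewrite -(rform u) -(rform v) H. Qed.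
End Retr.

Lemma triI (x y z : ob C) (f : hom x y) (g : hom y z) :
  (runit g ⊗ 1_f) • assoc_inv g (id1 y) f = 1_g ⊗ lunit f.
Proof. by rewrite -tri vA' aKi v1r. Qed.

Lemma LA (y : ob C) :
  lunit (comp1 (id1 y) (id1 y)) • assoc (id1 y) (id1 y) (id1 y) = runit (comp1 (id1 y) (id1 y)).
Proof. by rewrite K1 K2 rK1. Qed.

Section Split.
Variables (x : ob C) (E : hom x x) (r : cell (id1 x) E) (s : cell E (id1 x)).
Hypothesis Hrs : r • s = 1_E.

Definition mu_of : cell (comp1 E E) E := r • lunit (id1 x) • (s ⊗ s).
Definition de_of : cell E (comp1 E E) := (r ⊗ r) • lunit_inv (id1 x) • s.

Lemma rp : r • (s • r) = r.
Proof. by rewrite vA Hrs v1l. Qed.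
Lemma pS : s • r • s = s.
Proof. by rewrite vA' Hrs v1r. Qed.

Lemma I5 : mu_of • de_of = 1_E.
Proof.
rewrite /mu_of /de_of !vA' (vA (s ⊗ s)) -hv (vA (lunit _)) EH !vA' (vA (lunit _)) lKi v1l.
by rewrite !vA Hrs v1l Hrs v1l Hrs.
Qed.

Lemma DM : de_of • mu_of = 1_(comp1 E E).
Proof.
rewrite /mu_of /de_of !vA' (vA (lunit_inv _)) liN !vA' (vA (lunit_inv _)) liN.
rewrite !vA' (vA (lunit_inv _)) liK v1l (vA (1_ _ ⊗ s)) hv1l (vA (_ ⊗ r)) -hv.
by rewrite v1r rp -hv Hrs h11.
Qed.

Lemma I3R : (mu_of ⊗ 1_E) • (assoc_inv E E E • (1_E ⊗ de_of)) = 1_(comp1 E E).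
Proof.
rewrite /mu_of /de_of -!hv1r -!hv1l !vA' (vA (assoc_inv _ _ _)) aiN.
rewrite !vA' (vA (s ⊗ s ⊗ 1_E)) -(hv _ (s ⊗ s)) v1l -(hv _ s) v1r (vA (lunit _ ⊗ 1_E)) -hv v1l.
rewrite (hsr s (s • r)) (vA (lunit _) (1_ _ ⊗ _)) lN vA' lrN (vA (s • r)) pS (vA (r ⊗ 1_E)) -hv v1l (vA r) Hrs v1l.
rewrite (hsr _ r) (vA' (1_E ⊗ r)) (vA (runit E ⊗ _)) triI !hv1l.
by rewrite (vA (lunit _)) lKi v1l Hrs h11.
Qed.

Lemma I1L : mu_of • (mu_of ⊗ 1_E) =
  r • lunit (id1 x) • runit (comp1 (id1 x) (id1 x)) • ((s ⊗ s) ⊗ s).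
Proof.
rewrite /mu_of -!hv1r !vA'.
rewrite (vA (s ⊗ s)) -(hv r s) v1r (vA ((s • r) ⊗ s)) -(hv (lunit _) (s • r)) v1r.
rewrite -(hv (s ⊗ s) (s • r • lunit _)) v1r.
rewrite hsl (vA (lunit _)) lrN !vA' (vA (s ⊗ s)) -rN vA' -hsl.
by rewrite (vA r s) Hrs v1l.
Qed.

Lemma I1R : mu_of • ((1_E ⊗ mu_of) • assoc E E E) =
  r • lunit (id1 x) • runit (comp1 (id1 x) (id1 x)) • ((s ⊗ s) ⊗ s).
Proof.
rewrite /mu_of -!hv1l !vA'.
rewrite (vA (s ⊗ s)) -(hv _ s) v1r (vA (s ⊗ _)) -(hv _ s) v1r (vA (s ⊗ _)) -(hv _ s) v1r.
rewrite hsr !vA' (vA (lunit _)) lN !vA' (vA (s ⊗ s)) -lN !vA' (vA (1_ _ ⊗ _)) -hsr -aN.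
rewrite (vA (lunit _) (assoc _ _ _)) LA.
by rewrite (vA r s) Hrs v1l.
Qed.

Lemma Hmb_of (b : cell (id1 x) (id1 x)) : mu_of • ((1_E ⊗ (r • b • s)) • de_of) = r • b • s.
Proof.
rewrite /mu_of /de_of !vA' (vA (s ⊗ s)) -hv v1r (vA (_ ⊗ _)) -hv (vA (lunit _)) EH !vA' (vA (lunit _)) lKi v1l.
by rewrite !vA Hrs v1l Hrs v1l (vA' _ r s) Hrs v1r.
Qed.

Lemma idem_mu_de : idem2 mu_of de_of.
Proof.
have I1 : mu_of • (mu_of ⊗ 1_E) = mu_of • ((1_E ⊗ mu_of) • assoc E E E).
  by rewrite I1L I1R.
move: I1 I3R DM I5.
move: mu_of de_of => mu de I1 I3R DM I5.
split => //.
- have -> : assoc E E E • ((de ⊗ 1_E) • de) = (1_E ⊗ de) • de • (mu • ((1_E ⊗ mu) • assoc E E E)) • ((de ⊗ 1_E) • de).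
    by rewrite !vA' (vA de mu) DM v1l (vA (1_E ⊗ de)) hv1l DM h11 v1l.
  by rewrite -I1 !vA' (vA (mu ⊗ _)) hv1r I5 h11 v1l I5 v1r.
- by rewrite I3R DM.
- rewrite DM; symmetry; rewrite -[LHS]v1l -{1}I3R.
  by rewrite !vA' (vA (1_E ⊗ de)) hv1l DM h11 v1l (vA (assoc_inv _ _ _)) aiK v1l hv1r I5 h11.
Qed.

End Split.

Section Piece.
Variables (x : ob C) (E : hom x x) (r : cell (id1 x) E) (s : cell E (id1 x)).
Hypothesis Hrs : r • s = 1_E.
Variables (d : ob C) (f : hom x d) (g : hom d x).
Variables (phi : cell (comp1 f g) (id1 d)) (ga : cell (id1 d) (comp1 f g)).
Variables (th : cell (comp1 g f) E) (thi : cell E (comp1 g f)).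

Definition mu' : cell (comp1 (comp1 g f) (comp1 g f)) (comp1 g f) :=
      vcomp (hcomp (id2 g) (lunit f))
       (vcomp (hcomp (id2 g) (hcomp phi (id2 f)))
        (vcomp (hcomp (id2 g) (assoc_inv f g f)) (assoc g f (comp1 g f)))).
Definition de' : cell (comp1 g f) (comp1 (comp1 g f) (comp1 g f)) :=
      vcomp (assoc_inv g f (comp1 g f))
       (vcomp (hcomp (id2 g) (assoc f g f))
        (vcomp (hcomp (id2 g) (hcomp ga (id2 f))) (hcomp (id2 g) (lunit_inv f)))).

Variables (mu : cell (comp1 E E) E) (de : cell E (comp1 E E)).
Hypothesis HDM : de • mu = 1_ _.
Hypothesis HI5 : mu • de = 1_ _.
Hypothesis Hmb : forall b : cell (id1 x) (id1 x), mu • ((1_E ⊗ (r • b • s)) • de) = r • b • s.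
Hypothesis S1 : phi • ga = 1_(id1 d).
Hypothesis S2 : thi • th = 1_ _.
Hypothesis S3 : th • thi = 1_E.
Hypothesis S4 : th • mu' = mu • (th ⊗ th).
Hypothesis S5 : de • th = (th ⊗ th) • de'.

Lemma Hmu' : mu' = thi • mu • (th ⊗ th).
Proof. by rewrite vA' -S4 vA S2 v1l. Qed.
Lemma Hde' : de' = (thi ⊗ thi) • de • th.
Proof. by rewrite vA' S5 vA -hv S2 h11 v1l. Qed.

Lemma de'mu' : de' • mu' = 1_ _.
Proof.
rewrite Hmu' Hde' !vA' (vA th thi) S3 v1l (vA de) HDM v1l -hv S2 h11 //.
Qed.

Lemma gaphi : ga • phi = 1_(comp1 f g).
Proof.
have H := de'mu'.
rewrite /de' /mu' in H.
rewrite !vA' !hv1lA in H.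
have HZ : 1_g ⊗ (assoc f g f • (((ga • phi) ⊗ 1_f) • assoc_inv f g f))
        = 1_g ⊗ (assoc f g f • ((1_ (comp1 f g) ⊗ 1_f) • assoc_inv f g f)).
  rewrite h11 v1l aKi h11.
  rewrite !vA' (vA (lunit_inv f)) liK v1l hv1rA in H.
  rewrite -[LHS]v1l -(aKi g f (comp1 g f)) -[LHS]v1r -(aKi g f (comp1 g f)).
  by rewrite !vA' (vA (1_g ⊗ _)) (vA (assoc_inv _ _ _)) H v1l.
move/(lcancel S1): HZ => HZ.
apply: (rcancel S1).
apply: (conj_inj (aiK f g f)).
by rewrite vA' HZ vA'.
Qed.

Definition Phi (a : cell (id1 d) (id1 d)) : cell (id1 x) (id1 x) :=
  s • th • (1_g ⊗ Lw f a) • thi • r.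

Lemma PhiM (a b : cell (id1 d) (id1 d)) : Phi (a • b) = Phi a • Phi b.
Proof.
rewrite /Phi LwM -hv1l !vA' (vA r s) Hrs v1l (vA thi th) S2 v1l.
by rewrite !vA.
Qed.

Lemma Phi_p (a : cell (id1 d) (id1 d)) : s • r • Phi a = Phi a.
Proof. by rewrite /Phi !vA (vA' s r s) Hrs v1r. Qed.

Lemma LwE_rs (b : cell (id1 x) (id1 x)) : Lw E b = r • b • s.
Proof. by rewrite -[LHS]v1l -Hrs vA' LwN Lw1 vA. Qed.

Lemma Phi_inj : injective Phi.
Proof.
move=> a a' H.
have HW : 1_g ⊗ Lw f a = 1_g ⊗ Lw f a'.
  have E0 c : 1_g ⊗ Lw f c = thi • (r • Phi c • s) • th.
    by rewrite /Phi !vA (vA' thi r s) Hrs v1r S2 v1l (vA' _ r s) Hrs v1r vA' S2 v1r.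
  by rewrite !E0 H.
move/(lcancel S1): HW => HW.
have E1 c : c = phi • (Lw f c ⊗ 1_g) • ga.
  by rewrite LwC LwN Lw1 vA' S1 v1r.
by rewrite (E1 a) HW -E1.
Qed.

Lemma key (b : cell (id1 x) (id1 x)) :
  1_g ⊗ Lw f (phi • (1_f ⊗ Lw g b) • ga) = mu' • ((1_(comp1 g f) ⊗ Lw (comp1 g f) b) • de').
Proof.
rewrite /mu' /de'.
rewrite -LwC -(h11 g f) !vA' (vA (assoc g f _)) aN !vA' (vA (assoc g f _)) aKi v1l !hv1lA hv1l.
congr (1_g ⊗ _).
by rewrite (vA' _ (assoc_inv f g f)) aiN /Lw -!hv1r !vA' (vA (assoc_inv _ _ _)) aiK v1l.
Qed.

Lemma Phi_surj (b : cell (id1 x) (id1 x)) :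
  Phi (phi • (1_f ⊗ Lw g b) • ga) = s • (r • b • s) • r.
Proof.
rewrite /Phi key Hmu' Hde' !vA' (vA th thi) S3 v1l.
rewrite (vA th thi) S3 v1l (vA (th ⊗ th)) -hv v1r (vA (th ⊗ _)) -hv S3 LwN vA' S3 v1r LwE_rs (vA _ de) (vA mu) Hmb.
by rewrite !vA'.
Qed.

Lemma PhiD (a b : cell (id1 d) (id1 d)) : Phi (a + b) = Phi a + Phi b.
Proof. by rewrite /Phi /Lw hDl !(vDr, vDl, hDr). Qed.



End Piece.

Lemma zero_retract (x y : ob C) (A B : hom x y) (u : cell A B) (v : cell B A) :
  v • u = 1_A -> 1_B = 0 -> 1_A = 0.
Proof. by move=> H1 H0; rewrite -H1 -[u]v1l H0 v0l v0r. Qed.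

Lemma rs_cross (x : ob C) (E1 E2 : hom x x) (r1 : cell (id1 x) E1) (s1 : cell E1 (id1 x))
  (r2 : cell (id1 x) E2) (s2 : cell E2 (id1 x)) :
  r1 • s1 = 1_ _ -> r2 • s2 = 1_ _ -> (s1 • r1) • (s2 • r2) = 0 -> r1 • s2 = 0.
Proof.
move=> H1 H2 H0.
have -> : r1 • s2 = r1 • ((s1 • r1) • (s2 • r2)) • s2.
  by rewrite !vA H1 v1l (vA' _ r2 s2) H2 v1r.
by rewrite H0 v0r v0l.
Qed.

Lemma cross (x : ob C) (E1 E2 : hom x x) (r1 : cell (id1 x) E1) (s1 : cell E1 (id1 x))
  (r2 : cell (id1 x) E2) (s2 : cell E2 (id1 x))
  (d1 d2 : ob C) (f1 : hom x d1) (g1 : hom d1 x) (f2 : hom x d2) (g2 : hom d2 x)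
  (phi1 : cell (comp1 f1 g1) (id1 d1)) (ga1 : cell (id1 d1) (comp1 f1 g1))
  (phi2 : cell (comp1 f2 g2) (id1 d2)) (ga2 : cell (id1 d2) (comp1 f2 g2))
  (th1 : cell (comp1 g1 f1) E1) (thi1 : cell E1 (comp1 g1 f1))
  (th2 : cell (comp1 g2 f2) E2) (thi2 : cell E2 (comp1 g2 f2)) :
  r1 • s1 = 1_ _ -> r2 • s2 = 1_ _ -> phi1 • ga1 = 1_ _ -> phi2 • ga2 = 1_ _ ->
  thi1 • th1 = 1_ _ -> thi2 • th2 = 1_ _ ->
  (s1 • r1) • (s2 • r2) = 0 -> 1_(comp1 f1 g2) = 0.
Proof.
move=> Hrs1 Hrs2 Hpg1 Hpg2 Ht1 Ht2 H0.
apply: (rcancel Hpg2); rewrite h0l.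
apply: (lcancel Hpg1); rewrite h0r !h11.
apply: (zero_retract (u := assoc_inv g1 f1 (comp1 g2 f2) • (1_g1 ⊗ assoc f1 g2 f2))
                     (v := (1_g1 ⊗ assoc_inv f1 g2 f2) • assoc g1 f1 (comp1 g2 f2))).
  by rewrite vA' (vA (assoc _ _ _)) aKi v1l hv1l aiK h11.
apply: (zero_retract (u := th1 ⊗ th2) (v := thi1 ⊗ thi2)).
  by rewrite -hv Ht1 Ht2 h11.
have Hp : (s1 • r1) ⊗ (s2 • r2) = 0.
  by rewrite -[LHS]v1l -(liK (id1 x)) vA' EH H0 v0l v0r.
by rewrite -h11 -Hrs1 -Hrs2 -{1}(rp Hrs1) -{1}(rp Hrs2) !hv -hv Hp v0r v0l.
Qed.

Record piece (x : ob C) (p : cell (id1 x) (id1 x)) := Piece {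
  pE : hom x x; qr : cell (id1 x) pE; qs : cell pE (id1 x);
  pd : ob C; pf : hom x pd; pg : hom pd x;
  pphi : cell (comp1 pf pg) (id1 pd); pga : cell (id1 pd) (comp1 pf pg);
  pth : cell (comp1 pg pf) pE; pthi : cell pE (comp1 pg pf);
  Hrs : qr • qs = 1_ pE; Hsr : qs • qr = p;
  HS1 : pphi • pga = 1_ _; HS2 : pthi • pth = 1_ _; HS3 : pth • pthi = 1_ pE;
  HS4 : pth • mu' pphi = mu_of qr qs • (pth ⊗ pth);
  HS5 : de_of qr qs • pth = (pth ⊗ pth) • de' pga }.

Lemma ex_piece (Hid : idem_complete C) (x : ob C) (p : cell (id1 x) (id1 x)) :
  p • p = p -> exists P : piece p, True.
Proof.
move=> Hp; case: Hid => H1 H2.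
case: (H1 _ _ (id1 x) p Hp) => E [r [s [Hrs Hsr]]].
have Hi := idem_mu_de Hrs.
case: (H2 _ _ _ _ Hi) => d [f [g [phi [ga [th [thi H]]]]]].
move: H; cbv zeta; case=> S1 S2 S3 S4 S5.
by exists (Piece Hrs Hsr S1 S2 S3 S4 S5).
Qed.

Lemma main (Hidem : idem_complete C) (x : ob C) (I : finType) (A : I -> End2 x -> Prop) :
  ring_decomp A ->
  exists (xs : I -> ob C) (X : ob C),
    [/\ is_direct_sum xs X, equiv_ob x X &
        forall i, exists phi : End2 (xs i) -> End2 x, ring_iso_onto phi (A i)].
Proof.
move=> [A0 Asub Aid Adec Auniq].
have [e [He Hsum]] := Adec (id2 (id1 x)).
have Hright : forall i (b : cell (id1 x) (id1 x)), A i b -> forall j, b • e j = if j == i then b else 0.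
  move=> i b Hb.
  apply: (Auniq (fun j => b • e j) (fun j => if j == i then b else 0)).
  - by move=> j; case: (Aid j b (e j) (He j)).
  - by move=> j; case: eqP => [->|] //.
  rewrite -(big_morph (vcomp b) (vDr b) (v0r _ b)) -Hsum v1r.
  by rewrite (bigD1 i) //= eqxx big1 ?addr0 // => j /negbTE ->.
have Hleft : forall i (b : cell (id1 x) (id1 x)), A i b -> forall j, e j • b = if j == i then b else 0.
  move=> i b Hb.
  apply: (Auniq (fun j => e j • b) (fun j => if j == i then b else 0)).
  - by move=> j; case: (Aid j b (e j) (He j)).
  - by move=> j; case: eqP => [->|] //.
  rewrite -(big_morph (vcomp^~ b) (fun a1 a2 => vDl a1 a2 b) (v0l _ b)) -Hsum v1l.
  by rewrite (bigD1 i) //= eqxx big1 ?addr0 // => j /negbTE ->.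
have Hee : forall i, e i • e i = e i by move=> i; rewrite (Hright i _ (He i) i) eqxx.
have He0 : forall i j, i != j -> e i • e j = 0.
  by move=> i j nij; rewrite (Hright i _ (He i) j) eq_sym (negbTE nij).
have HP : forall i, exists P : piece (e i), True by move=> i; apply: ex_piece.
pose Pc i := proj1_sig (constructive_indefinite_description _ (HP i)).
exists (fun i => pd (Pc i)), x; split.
- exists (fun i => pg (Pc i)), (fun i => pf (Pc i)); split.
  + move=> j; exists (pphi (Pc j)), (pga (Pc j)); split; last exact: HS1.
    exact: (gaphi (DM (Hrs _)) (HS1 _) (HS2 _) (HS3 _) (HS4 _) (HS5 _)).
  + move=> j k njk; exists (comp1 (pf (Pc j)) (pg (Pc k))); split.
      apply: (cross (Hrs _) (Hrs _) (HS1 _) (HS1 _) (HS2 _) (HS2 _)).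
      by rewrite !Hsr He0.
    by exists (id2 _), (id2 _); rewrite v1l.
  + exists (id1 x); split; last by exists (id2 _), (id2 _); rewrite v1l.
    exists (fun i => qs (Pc i) • pth (Pc i)), (fun i => pthi (Pc i) • qr (Pc i)); split.
    * by move=> i; rewrite vA (vA' _ (qr _) (qs _)) Hrs v1r HS2.
    * move=> i j nij.
      have H0 : qr (Pc i) • qs (Pc j) = 0.
        by apply: (rs_cross (Hrs _) (Hrs _)); rewrite !Hsr He0.
      by rewrite vA (vA' _ (qr _) (qs _)) H0 v0r v0l.
    * rewrite Hsum; apply: eq_bigr => i _.
      by rewrite vA (vA' _ (pth _) (pthi _)) HS3 v1r Hsr.
- exists (id1 x), (id1 x); split; exists (lunit _), (lunit_inv _); split; by [rewrite liK | rewrite lKi].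
- move=> i; exists (Phi (qr (Pc i)) (qs (Pc i)) (pth (Pc i)) (pthi (Pc i))); split.
  + exact: PhiD.
  + exact: (PhiM (Hrs _) (HS2 _)).
  + exact: (Phi_inj (Hrs _) (HS1 _) (HS2 _)).
  + move=> a; rewrite -Phi_p ?Hsr; last exact: Hrs.
    by case: (Aid i (Phi (qr (Pc i)) (qs (Pc i)) (pth (Pc i)) (pthi (Pc i)) a) (e i) (He i)).
  + move=> b Hb; exists (pphi (Pc i) • (1_(pf (Pc i)) ⊗ Lw (pg (Pc i)) b) • pga (Pc i)).
    rewrite (Phi_surj (Hrs _) (Hmb_of (Hrs _)) (HS2 _) (HS3 _) (HS4 _) (HS5 _)).
    rewrite !vA (vA' _ (qs _) (qr _)) !Hsr.
    have := Hleft i b Hb i; rewrite eqxx => ->.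
    by have := Hright i b Hb i; rewrite eqxx => ->.
Qed.

End Basic.

Theorem proposition2p16 (C : bicat) (HC : bicat_axioms C) (Hadd : locally_additive C)
    (Hidem : idem_complete C) (x : ob C) (I : finType) (A : I -> End2 x -> Prop) :
  ring_decomp A ->
  exists (xs : I -> ob C) (X : ob C),
    [/\ is_direct_sum xs X, equiv_ob x X &
        forall i, exists phi : End2 (xs i) -> End2 x, ring_iso_onto phi (A i)].
Proof. exact: (main HC Hadd Hidem). Qed.
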